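(* Let $\mathbf{A}$ be an algebra and let $\mathbf{E}\le\mathbf{F}\le\mathbf{A}^2$ be subalgebras such that $E$ Jónsson absorbs $\mathbf{F}$. Suppose $(a,a),(b,b)\in E$ for some $a,b\in A$ and there is a directed path from $a$ to $b$ in the digraph $(A,F)$. Then there is a directed path from $a$ to $b$ in the digraph $(A,E)$.
   Context: A binary relation $E\subseteq A^2$ is viewed as a digraph $(A,E)$ with edge set $E$. Jónsson absorption: a subuniverse $E$ of an algebra $\mathbf{F}$ Jónsson absorbs $\mathbf{F}$ if there are ternary terms $d_0,\dots,d_n$ such that $d_i(e,f,e')\in E$ for all $i$, all $e,e'\in E$, $f\in F$; $d_i(x,y,y)=d_{i+1}(x,x,y)$ for all $i<n$ and all $x,y\in F$; $d_0(x,y,z)=x$ and $d_n(x,y,z)=z$ for all $x,y,z\in F$. *)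

(* Defs.v *)
From mathcomp Require Import all_boot.
From Stdlib Require Import Relations.
Set Implicit Arguments. Unset Strict Implicit. Unset Printing Implicit Defensive.

Record signature := Signature { op_sym : Type; arity : op_sym -> nat }.

Definition interpretation (sg : signature) (A : Type) :=
  forall f : op_sym sg, ('I_(arity f) -> A) -> A.

Inductive term (sg : signature) (V : Type) : Type :=
| Var : V -> term sg V
| App : forall f : op_sym sg, ('I_(arity f) -> term sg V) -> term sg V.

Fixpoint eval (sg : signature) (A : Type) (I : interpretation sg A) (V : Type)
  (env : V -> A) (t : term sg V) : A :=
  match t with
  | Var x => env x
  | App f ts => I f (fun i => eval I env (ts i))
  end.

Definition sq_interp (sg : signature) (A : Type) (I : interpretation sg A)
  : interpretation sg (A * A) :=
  fun f args => (I f (fun i => (args i).1), I f (fun i => (args i).2)).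

Definition subuniverse (sg : signature) (B : Type) (J : interpretation sg B)
  (S : B -> Prop) : Prop :=
  forall (f : op_sym sg) (args : 'I_(arity f) -> B),
    (forall i, S (args i)) -> S (J f args).

Definition app3 (sg : signature) (B : Type) (J : interpretation sg B)
  (d : term sg 'I_3) (x y z : B) : B :=
  eval J (fun i : 'I_3 => match val i with 0 => x | 1 => y | _ => z end) d.

(* Jónsson absorption: the subuniverse E of the algebra F (here F is a
   subuniverse of the algebra (B, J), with the induced operations) Jónsson
   absorbs F via ternary terms d_0, ..., d_n. *)
Definition jonsson_absorbs (sg : signature) (B : Type) (J : interpretation sg B)
  (E F : B -> Prop) : Prop :=
  exists (n : nat) (d : nat -> term sg 'I_3),
    (forall i, i <= n -> forall e f e', E e -> F f -> E e' ->
        E (app3 J (d i) e f e'))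
    /\ (forall i, i < n -> forall x y, F x -> F y ->
        app3 J (d i) x y y = app3 J (d i.+1) x x y)
    /\ (forall x y z, F x -> F y -> F z -> app3 J (d 0) x y z = x)
    /\ (forall x y z, F x -> F y -> F z -> app3 J (d n) x y z = z).

Definition dipath (A : Type) (R : A * A -> Prop) (a b : A) : Prop :=
  clos_refl_trans A (fun x y => R (x, y)) a b.

(* Main.v *)
Require Import Defs.
From mathcomp Require Import all_boot.
From Stdlib Require Import Relations FunctionalExtensionality.

Lemma eval_sq1 (sg : signature) (A : Type) (I : interpretation sg A) (V : Type)
  (t : term sg V) : forall (env : V -> A * A) (env1 : V -> A),
  (forall v, (env v).1 = env1 v) -> (eval (sq_interp I) env t).1 = eval I env1 t.
Proof.
elim: t => [x|f ts IH] env env1 H /=; first exact: H.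
rewrite /sq_interp /=. f_equal. apply: functional_extensionality => i.
exact: IH.
Qed.

Lemma eval_sq2 (sg : signature) (A : Type) (I : interpretation sg A) (V : Type)
  (t : term sg V) : forall (env : V -> A * A) (env1 : V -> A),
  (forall v, (env v).2 = env1 v) -> (eval (sq_interp I) env t).2 = eval I env1 t.
Proof.
elim: t => [x|f ts IH] env env1 H /=; first exact: H.
rewrite /sq_interp /=. f_equal. apply: functional_extensionality => i.
exact: IH.
Qed.

Lemma app3_sq (sg : signature) (A : Type) (I : interpretation sg A) d (x y z : A * A) :
  app3 (sq_interp I) d x y z = (app3 I d x.1 y.1 z.1, app3 I d x.2 y.2 z.2).
Proof.
rewrite [LHS]surjective_pairing /app3; congr pair.
  by apply: eval_sq1 => v; case: (val v) => [|[|]].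
by apply: eval_sq2 => v; case: (val v) => [|[|]].
Qed.

Theorem lemma2p6 (sg : signature) (A : Type) (I : interpretation sg A)
  (E F : A * A -> Prop) :
  subuniverse (sq_interp I) E ->
  subuniverse (sq_interp I) F ->
  (forall p, E p -> F p) ->
  jonsson_absorbs (sq_interp I) E F ->
  forall a b : A, E (a, a) -> E (b, b) -> dipath F a b -> dipath E a b.
Proof.
move=> _ _ EF [n [d [Hd [Hs [H0 Hn]]]]] a b Ea Eb Pab.
have step : forall i, i <= n -> forall u v, dipath F u v ->
    dipath E (app3 I (d i) a u b) (app3 I (d i) a v b).
  move=> i hi u v; rewrite /dipath; elim => [x y Fxy| x | x y z _ IH1 _ IH2].
  - apply: rt_step.
    have := Hd i hi _ _ _ Ea Fxy Eb; by rewrite app3_sq.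
  - exact: rt_refl.
  - exact: rt_trans IH1 IH2.
have main : forall i, i <= n -> dipath E a (app3 I (d i) a b b).
  elim => [_|i IH hi].
  - have := H0 (a, a) (a, a) (b, b) (EF _ Ea) (EF _ Ea) (EF _ Eb).
    rewrite app3_sq => -[e1 _]. rewrite -[X in dipath E X _]e1.
    exact: step (Pab).
  - have := Hs i hi (a, a) (b, b) (EF _ Ea) (EF _ Eb).
    rewrite !app3_sq => -[e1 _].
    apply: rt_trans (IH (ltnW hi)) _. rewrite e1. exact: step hi _ _ Pab.
have := Hn (a, a) (b, b) (b, b) (EF _ Ea) (EF _ Eb) (EF _ Eb).
rewrite app3_sq => -[e1 _]. rewrite -[X in dipath E _ X]e1. exact: main.
Qed.
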